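(* Suppose $n\ge 3k$ and let $U_1,\dots,U_{\binom nk},V_1,\dots,V_n\in\mathbb{R}^d$ be a margin-$m$, relative-bias-$0$ embedding of $S_{n,k}$ in dimension $d$. Let $V\in\mathbb{R}^{d\times n}$ be the matrix with columns $V_1,\dots,V_n$. Then every $x\in\mathbb{R}^n$ with at most $k$ nonzero coordinates satisfies $\|Vx\|_2\ge m\|x\|_1$.
   Context: $S_{n,k}\in\{0,1\}^{\binom{n}{k}\times n}$ is the matrix whose rows are all the distinct vectors in $\{0,1\}^n$ with exactly $k$ ones, each appearing exactly once. For $A\in\{0,1\}^{N\times n}$ and $m\ge0$, unit vectors $U_1,\dots,U_N,V_1,\dots,V_n\in\mathbb{R}^d$ form a margin-$m$, relative-bias-$0$ embedding of $A$ if $\langle U_j,V_i\rangle\ge m$ whenever $A_{ji}=1$ and $\langle U_j,V_i\rangle\le -m$ whenever $A_{ji}=0$. *)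

(* Defs.v *)
From HB Require Import structures.
From mathcomp Require Import all_boot all_order all_algebra.
From mathcomp Require Export reals.
From mathcomp Require Export all_boot all_order all_algebra.
Set Implicit Arguments. Unset Strict Implicit. Unset Printing Implicit Defensive.
Import Order.TTheory GRing.Theory Num.Theory.
Local Open Scope ring_scope.

Definition dotv (R : realType) (d : nat) (u v : 'cV[R]_d) : R :=
  \sum_(l < d) u l ord0 * v l ord0.

Definition norm2 (R : realType) (d : nat) (u : 'cV[R]_d) : R :=
  Num.sqrt (\sum_(l < d) u l ord0 ^+ 2).

Definition norm1 (R : realType) (n : nat) (x : 'cV[R]_n) : R :=
  \sum_(i < n) `|x i ord0|.

Definition unit_vec (R : realType) (d : nat) (u : 'cV[R]_d) : Prop :=
  norm2 u = 1.

(* The rows of S_{n,k} are in bijection with the k-subsets A of {0..n-1}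
   (row indicator vector of A). Row U_A is thus indexed by A : {set 'I_n}
   with #|A| = k, and (S_{n,k})_{A,i} = 1 iff i \in A. *)
Definition margin_embedding_Snk (R : realType) (n k d : nat) (m : R)
    (U : {set 'I_n} -> 'cV[R]_d) (V : 'M[R]_(d, n)) : Prop :=
  (forall A : {set 'I_n}, #|A| = k -> unit_vec (U A)) /\
  (forall i : 'I_n, unit_vec (col i V)) /\
  (forall (A : {set 'I_n}) (i : 'I_n), #|A| = k ->
      (i \in A -> m <= dotv (U A) (col i V)) /\
      (i \notin A -> dotv (U A) (col i V) <= - m)).

(* Main.v *)
Require Import Defs.
From mathcomp Require Import all_boot all_order all_algebra reals.
From mathcomp Require Import ring lra zify.
Import Order.TTheory GRing.Theory Num.Theory.
Local Open Scope ring_scope.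

Lemma extend_set (T : finType) (C : {set T}) (k : nat) : forall j (B : {set T}),
  (k - #|B| = j)%N -> B \subset C -> (#|B| <= k)%N -> (k <= #|C|)%N ->
  exists A : {set T}, [/\ B \subset A, A \subset C & #|A| = k].
Proof.
elim=> [|j IH] B hj hBC hB hC.
  exists B; split => //; apply/eqP; rewrite eqn_leq hB /=; move/eqP: hj; by rewrite subn_eq0.
have hlt : (#|B| < #|C|)%N by apply: (leq_trans _ hC); rewrite -subn_gt0 hj.
have [y hy] : exists y, y \in C :\: B.
  apply/set0Pn; rewrite -card_gt0 cardsD (setIidPr hBC) subn_gt0 //.
move: hy; rewrite in_setD => /andP [hyB hyC].
have e1 : (k - #|y |: B| = j)%N by rewrite cardsU1 hyB add1n subnS hj.
have e2 : y |: B \subset C by rewrite subUset sub1set hyC hBC.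
have e3 : (#|y |: B| <= k)%N by rewrite cardsU1 hyB add1n -subn_gt0 hj.
have [A [h1 h2 h3]] := IH (y |: B) e1 e2 e3 hC.
exists A; split => //; apply: subset_trans h1; exact: subsetUr.
Qed.

Lemma cs (R : realType) (d : nat) (u w : 'I_d -> R) :
  \sum_(l < d) u l ^+ 2 = 1 -> \sum_(l < d) u l * w l <= Num.sqrt (\sum_(l < d) w l ^+ 2).
Proof.
move=> hu.
have key : forall a : R, \sum_(l < d) (a * u l - w l) ^+ 2 =
   a ^+ 2 * \sum_(l < d) u l ^+ 2 - (2 * a) * \sum_(l < d) u l * w l + \sum_(l < d) w l ^+ 2.
  move=> a; rewrite !mulr_sumr -sumrB -big_split /=.
  by apply: eq_bigr => l _; ring.
have h0 := key (\sum_(l < d) u l * w l).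
set c := \sum_(l < d) u l * w l in h0 *.
have [hc|hc] := lerP c 0; first exact: le_trans hc (sqrtr_ge0 _).
have hw : 0 <= \sum_(l < d) w l ^+ 2 by apply: sumr_ge0 => l _; exact: sqr_ge0.
rewrite -(ger0_norm (ltW hc)) -sqrtr_sqr ler_sqrt //.
have h1 : 0 <= \sum_(l < d) (c * u l - w l) ^+ 2 by apply: sumr_ge0 => l _; exact: sqr_ge0.
rewrite h0 hu in h1; nra.
Qed.

Theorem lemma3p2 (R : realType) (n k d : nat) (m : R)
    (U : {set 'I_n} -> 'cV[R]_d) (V : 'M[R]_(d, n)) :
  (3 * k <= n)%N -> (0 <= m)%R ->
  @margin_embedding_Snk R n k d m U V ->
  forall x : 'cV[R]_n, (#|[set i | x i ord0 != 0%R]| <= k)%N ->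
    (m * norm1 x <= norm2 (V *m x))%R.
Proof.
move=> hn hm [hU [_ hUV]] x hS.
set S := [set i | x i ord0 != 0] in hS.
set P := [set i | 0 < x i ord0].
set N := [set i | x i ord0 < 0].
have hPS : P \subset S by apply/subsetP => i; rewrite !inE => h; rewrite gt_eqF.
have hNS : N \subset S by apply/subsetP => i; rewrite !inE => h; rewrite lt_eqF.
have hPN : P \subset ~: N.
  by apply/subsetP => i; rewrite !inE => h; rewrite -leNgt ltW.
have hP : (#|P| <= k)%N := leq_trans (subset_leq_card hPS) hS.
have hN : (#|N| <= k)%N := leq_trans (subset_leq_card hNS) hS.
have hC : (k <= #|~: N|)%N by rewrite cardsCs card_ord setCK; lia.
have [A [hPA hAN hA]] := @extend_set _ (~: N) k (k - #|P|)%N P (erefl _) hPN hP hC.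
have hu1 : \sum_(l < d) U A l ord0 ^+ 2 = 1.
  have := hU A hA; rewrite /unit_vec /norm2 => h.
  rewrite -(@sqr_sqrtr _ (\sum_(l < d) U A l ord0 ^+ 2)) ?h ?expr1n //.
  by apply: sumr_ge0 => l _; exact: sqr_ge0.
have hd := @cs R d (fun l => U A l ord0) (fun l => (V *m x) l ord0) hu1.
rewrite /norm2; apply: le_trans hd.
have -> : \sum_(l < d) U A l ord0 * (V *m x) l ord0 =
    \sum_(i < n) x i ord0 * dotv (U A) (col i V).
  under eq_bigr do rewrite mxE mulr_sumr.
  rewrite exchange_big /=; apply: eq_bigr => i _.
  rewrite /dotv mulr_sumr; apply: eq_bigr => l _; rewrite mxE; ring.
rewrite /norm1 mulr_sumr; apply: ler_sum => i _.
have [hAi hnAi] := hUV A i hA.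
have [hx|hx|hx] := ltrgtP (x i ord0) 0.
- have hiN : i \in N by rewrite inE.
  have hiA : i \notin A.
    apply/negP => hi; move/subsetP: hAN => /(_ i hi); by rewrite inE hiN.
  have := hnAi hiA; rewrite ltr0_norm //; nra.
- have hiA : i \in A by move/subsetP: hPA; apply; rewrite inE.
  have := hAi hiA; rewrite gtr0_norm //; nra.
- by rewrite hx normr0 mulr0 mul0r.
Qed.
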